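(* For every integer $k\ge 1$ and real $\zeta\in(0,1)$ there exists $\alpha_0=\alpha_0(k,\zeta)>0$ such that the following holds for every $\alpha\in(0,\alpha_0)$ and all positive integers $n,t$ with $n\ge 8k^4$, $t\ge n/(2k^3)$ and $t+1<(1-\zeta)n/k$. Let $X=\{x_1,\ldots,x_{t+1}\}$ be disjoint from $[n]$, and let $H$ be a $(1,k)$-partite $(k+1)$-graph with partition classes $X,[n]$. If every vertex of $H$ is $\alpha$-good with respect to $\mathcal{F}_{t+1}(k,n;t)$, then $\nu(H)\ge t$, and if $\nu(H)=t$ then $H$ is a subgraph of $\mathcal{F}_{t+1}(k,n;t)$ (i.e. every edge of $H$ meets $[t]$).
   Context: A $(k+1)$-graph is a pair $(V,E)$ with $E$ a family of $(k+1)$-subsets of $V$; $\nu(H)$ is the maximum number of pairwise disjoint edges of $H$. Given disjoint sets $Q,V$, a $(k+1)$-graph with vertex set $Q\cup V$ is $(1,k)$-partite with partition classes $Q,V$ if every edge $e$ satisfies $|e\cap Q|=1$ and $|e\cap V|=k$. $\mathcal{F}_{t+1}(k,n;t)$ denotes the $(1,k)$-partite $(k+1)$-graph with partition classes $X=\{x_1,\ldots,x_{t+1}\}$ and $[n]$ whose edges are all sets $\{x_i\}\cup e$ with $i\in[t+1]$, $e\in\binom{[n]}{k}$ and $e\cap[t]\ne\emptyset$. For a $(k+1)$-graph $G$ and a vertex $v$, $N_G(v)=\{S: |S|=k,\ S\cup\{v\}\in E(G)\}$. For $0<\alpha<1$, a vertex $v$ of $H$ (where $H$ has the same vertex set as $\mathcal{F}_{t+1}(k,n;t)$)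 is $\alpha$-good with respect to $\mathcal{F}_{t+1}(k,n;t)$ if $|N_{\mathcal{F}_{t+1}(k,n;t)}(v)\setminus N_H(v)|\le\alpha n^k$. *)

(* Defs.v *)
From mathcomp Require Import all_boot all_order all_algebra.
From mathcomp Require Import reals.
Set Implicit Arguments. Unset Strict Implicit. Unset Printing Implicit Defensive.
Import Order.TTheory GRing.Theory Num.Theory.

(* Vertex set X ∪ [n]: inl i is x_{i+1} (i < t+1), inr j is the integer j+1 of [n]. *)
Definition vtx (t n : nat) : finType := ('I_t.+1 + 'I_n)%type.

Definition isX (t n : nat) (v : vtx t n) : bool :=
  if v is inl _ then true else false.

Definition partite1k (k t n : nat) (H : {set {set vtx t n}}) : Prop :=
  forall e, e \in H ->
    #|[set v in e | isX v]| = 1 /\ #|[set v in e | ~~ isX v]| = k.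

Definition Fgraph (k t n : nat) : {set {set vtx t n}} :=
  [set (@inl 'I_t.+1 'I_n i) |: (@inr 'I_t.+1 'I_n @: e) | i : 'I_t.+1,
       e : {set 'I_n} in [set e : {set 'I_n} | (#|e| == k) && [exists j in e, (j < t)%N]]].

Definition nbhd (T : finType) (k : nat) (G : {set {set T}}) (v : T) : {set {set T}} :=
  [set S : {set T} | (#|S| == k) && ((v |: S) \in G)].

Definition good (R : realType) (k t n : nat) (alpha : R)
    (H : {set {set vtx t n}}) (v : vtx t n) : Prop :=
  (#|nbhd k (Fgraph k t n) v :\: nbhd k H v|%:R <= alpha * (n%:R ^+ k))%R.

Definition is_matching (T : finType) (M : {set {set T}}) : bool :=
  [forall e1 in M, forall e2 in M, (e1 != e2) ==> [disjoint e1 & e2]].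

Definition nu (T : finType) (H : {set {set T}}) : nat :=
  \max_(M in powerset H | is_matching M) #|M|.

(* Main.v *)
Require Import Defs.
From mathcomp Require Import all_boot all_order all_algebra.
From mathcomp Require Import reals.
From mathcomp Require Import zify ring lra.
Import Order.TTheory GRing.Theory Num.Theory.
Set Implicit Arguments. Unset Strict Implicit. Unset Printing Implicit Defensive.


Definition inT t n (v : vtx t n) : bool := if v is inr j then (j < t)%N else false.
Definition isO t n (v : vtx t n) : bool := ~~ isX v && ~~ inT v.
Definition PX t n : {set vtx t n} := [set v | isX v].
Definition PT t n : {set vtx t n} := [set v | inT v].
Definition PO t n : {set vtx t n} := [set v | isO v].
Definition cov (T : finType) (M : {set {set T}}) : {set T} := \bigcup_(e in M) e.
Definition ksub (T : finType) (A : {set T}) r := [set S : {set T} | S \subset A & #|S| == r].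

Lemma disjP (T : finType) (A B : {set T}) :
  reflect (forall x, x \in A -> x \in B -> False) [disjoint A & B].
Proof.
apply: (iffP pred0P) => [H x xA xB | H x] /=.
  by have := H x; rewrite /= xA xB.
by apply/andP => -[]; apply: H.
Qed.

Lemma matchingP (T : finType) (M : {set {set T}}) :
  reflect (forall e1 e2, e1 \in M -> e2 \in M -> e1 != e2 -> [disjoint e1 & e2])
          (is_matching M).
Proof.
apply: (iffP forall_inP) => [H e1 e2 h1 h2 ne | H e1 h1].
  by have /forall_inP/(_ e2 h2)/implyP := H e1 h1; apply.
by apply/forall_inP => e2 h2; apply/implyP; apply: H.
Qed.

Lemma covP (T : finType) (M : {set {set T}}) v :
  reflect (exists2 e, e \in M & v \in e) (v \in cov M).
Proof. by apply: (iffP bigcupP) => -[e h1 h2]; exists e. Qed.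

Lemma notcov (T : finType) (M : {set {set T}}) v e :
  v \notin cov M -> e \in M -> v \in e = false.
Proof. by move=> /covP nc eM; apply/negbTE/negP => ve; apply: nc; exists e. Qed.

Lemma isX_inT t n (v : vtx t n) : isX v -> inT v = false.
Proof. by case: v. Qed.

Lemma ksubP (T : finType) (A S : {set T}) r : (S \in ksub A r) = (S \subset A) && (#|S| == r).
Proof. by rewrite inE. Qed.

Lemma card_ksub (T : finType) (A : {set T}) r : #|ksub A r| = 'C(#|A|, r).
Proof. exact: cards_draws. Qed.

Lemma card_cov_le (T : finType) (A : {set T}) (M : {set {set T}}) :
  #|A :&: cov M| <= \sum_(e in M) #|A :&: e|.
Proof.
rewrite /cov; elim/big_rec2: _ => [|e U s _ IH]; first by rewrite setI0 cards0.
rewrite setIUr cardsU; apply: leq_trans (leq_subr _ _) _; exact: leq_add.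
Qed.

Lemma sum_le_inj (I T : finType) (P : {set I}) (A : I -> {set {set T}}) (g : I -> T)
    (S : {set {set T}}) :
  {in P &, injective g} ->
  (forall i i' X, i \in P -> i' \in P -> X \in A i' -> g i \notin X) ->
  (forall i X, i \in P -> X \in A i -> g i |: X \in S) ->
  \sum_(i in P) #|A i| <= #|S|.
Proof.
move=> ginj gX gS.
have -> : \sum_(i in P) #|A i| = #|[set p : I * {set T} | (p.1 \in P) && (p.2 \in A p.1)]|.
  rewrite -sum1_card; under eq_bigr do rewrite -sum1_card.
  by rewrite pair_big_dep; apply: eq_bigl => p; rewrite inE.
rewrite -(@card_in_imset _ _ (fun p => g p.1 |: p.2)).
  apply: subset_leq_card; apply/subsetP => y /imsetP[p]; rewrite inE => /andP[h1 h2] ->.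
  exact: gS.
move=> [i X] [i' X']; rewrite !inE /= => /andP[iP XA] /andP[i'P X'A] E.
have gi : g i = g i'.
  have : g i \in g i' |: X' by rewrite -E setU11.
  by rewrite in_setU1 (negbTE (gX _ _ _ iP i'P X'A)) orbF => /eqP.
have ii : i = i' by apply: ginj.
subst i'.
by rewrite -(setU1K (gX _ _ _ iP iP XA)) E setU1K // (gX _ _ _ iP iP X'A).
Qed.


Lemma InF r t n (x j : vtx t n) (T : {set vtx t n}) : isX x -> inT j -> T \subset PO t n -> #|T| = r ->
  x |: (j |: T) \in Fgraph r.+1 t n.
Proof.
case: x => // i _; case: j => // j0 /= j0t TPO Tr.
set T0 := [set y : 'I_n | inr y \in T].
have TE : T = inr @: T0.
  apply/setP; case => [a|b].
  - rewrite (_ : inl a \in T = false); last first.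
      by apply/negbTE/negP => /(subsetP TPO); rewrite inE.
    by symmetry; apply/negbTE/negP => /imsetP[y _].
  - by rewrite mem_imset ?inE //; move=> ? ? [].
have j0T : j0 \notin T0.
  by rewrite inE; apply/negP => /(subsetP TPO); rewrite inE /isO /= j0t.
rewrite TE -imsetU1.
apply: imset2_f; first by [].
rewrite inE cardsU1 j0T -Tr TE card_imset; last by move=> ? ? [].
rewrite eqxx /=; apply/existsP; exists j0; by rewrite setU11.
Qed.

Lemma card_PX t n : #|PX t n| = t.+1.
Proof.
have -> : PX t n = inl @: [set: 'I_t.+1].
  apply/setP; case => [a|b]; rewrite inE /=.
    by rewrite mem_imset ?inE //; move=> ? ? [].
  by apply/esym/negbTE/negP => /imsetP[].
by rewrite card_imset ?cardsT ?card_ord //; move=> ? ? [].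
Qed.

Lemma card_lt t n : t <= n -> #|[set j : 'I_n | j < t]| = t.
Proof.
move=> tn.
have -> : [set j : 'I_n | j < t] = (widen_ord tn) @: [set: 'I_t].
  apply/setP => j; rewrite inE; apply/idP/imsetP => [jt | [i _ ->]] /=.
  - by exists (Ordinal jt); [rewrite inE | apply/val_inj].
  - exact: ltn_ord.
by rewrite card_imset ?cardsT ?card_ord //; move=> a b /(congr1 val) /= ab; exact: val_inj.
Qed.

Lemma card_PT t n : t <= n -> #|PT t n| = t.
Proof.
move=> tn.
have -> : PT t n = inr @: [set j : 'I_n | j < t].
  apply/setP; case => [a|b]; rewrite inE /=.
    by apply/esym/negbTE/negP => /imsetP[].
  by rewrite mem_imset ?inE //; move=> ? ? [].
by rewrite card_imset ?card_lt //; move=> ? ? [].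
Qed.

Lemma card_PO t n : t <= n -> #|PO t n| = n - t.
Proof.
move=> tn; have := cardsC [set j : 'I_n | j < t]; rewrite card_lt // card_ord => E.
have -> : PO t n = inr @: ~: [set j : 'I_n | j < t].
  apply/setP; case => [a|b]; rewrite inE /=.
    by apply/esym/negbTE/negP => /imsetP[].
  by rewrite mem_imset ?inE /isO //; move=> ? ? [].
rewrite card_imset; last by move=> ? ? [].
by apply/eqP; rewrite -(eqn_add2l t) subnKC // E.
Qed.


Definition Inv r t n (H : {set {set vtx t n}}) (W : {set vtx t n}) (e : {set vtx t n}) : Prop :=
  [/\ e \in H, [disjoint e & W] &
   exists x j (T : {set vtx t n}),
     [/\ isX x, inT j, T \subset PO t n, #|T| = r & e = x |: (j |: T)]].
Definition GM r t n (H : {set {set vtx t n}}) (W : {set vtx t n}) M :=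
  is_matching M /\ (forall e, e \in M -> Inv r H W e).

Definition xv t n (e : {set vtx t n}) : vtx t n := odflt (inl ord0) [pick v in e | isX v].
Definition tv t n (e : {set vtx t n}) : vtx t n := odflt (inl ord0) [pick v in e | inT v].

Lemma xv_tv t n (x j : vtx t n) (T : {set vtx t n}) : isX x -> inT j -> T \subset PO t n ->
  xv (x |: (j |: T)) = x /\ tv (x |: (j |: T)) = j.
Proof.
move=> hx hj hT.
have TO v : v \in T -> isX v = false /\ inT v = false.
  by move/(subsetP hT); rewrite inE /isO => /andP[/negbTE -> /negbTE ->].
have jX : isX j = false by case: j hj.
have xT : inT x = false by apply: isX_inT.
split.
- rewrite /xv; case: pickP => [v /andP[] | none] /=.
    rewrite !in_setU1 => /orP[/eqP //|/orP[/eqP -> | /TO[-> _]]]; by rewrite ?jX.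
  by have := none x; rewrite setU11 hx.
- rewrite /tv; case: pickP => [v /andP[] | none] /=.
    rewrite !in_setU1 => /orP[/eqP -> | /orP[/eqP //| /TO[_ ->]]]; by rewrite ?xT.
  by have := none j; rewrite !in_setU1 eqxx orbT hj.
Qed.

Lemma Inv_props r t n (H : {set {set vtx t n}}) (W : {set vtx t n}) e : Inv r H W e ->
  [/\ e \in H, [disjoint e & W], isX (xv e), inT (tv e) &
      exists T : {set vtx t n}, [/\ T \subset PO t n, #|T| = r & e = xv e |: (tv e |: T)]].
Proof.
case=> eH eW [x [j [T [hx hj hT hr E]]]].
have [E1 E2] := xv_tv hx hj hT; rewrite -E in E1 E2.
by split => //; [rewrite E1 | rewrite E2 | exists T; rewrite E1 E2].
Qed.

Lemma xv_in r t n (H : {set {set vtx t n}}) (W : {set vtx t n}) e : Inv r H W e -> xv e \in e.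
Proof. by case/Inv_props=> _ _ _ _ [T [_ _ E]]; rewrite {2}E setU11. Qed.

Lemma tv_in r t n (H : {set {set vtx t n}}) (W : {set vtx t n}) e : Inv r H W e -> tv e \in e.
Proof. by case/Inv_props=> _ _ _ _ [T [_ _ E]]; rewrite {2}E !in_setU1 eqxx orbT. Qed.

Lemma GM_sub r t n (H : {set {set vtx t n}}) (W : {set vtx t n}) (M M' : {set {set vtx t n}}) : M' \subset M -> GM r H W M -> GM r H W M'.
Proof.
move=> sM [/matchingP mM iM]; split.
  by apply/matchingP => a b /(subsetP sM) aM /(subsetP sM) bM; apply: mM.
by move=> e /(subsetP sM); apply: iM.
Qed.

Lemma GM_add r t n (H : {set {set vtx t n}}) (W : {set vtx t n}) (M : {set {set vtx t n}}) e1 :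
  GM r H W M -> Inv r H W e1 -> (forall e, e \in M -> [disjoint e1 & e]) ->
  GM r H W (e1 |: M) /\ #|e1 |: M| = #|M|.+1.
Proof.
move=> [/matchingP mM iM] i1 D.
have e1M : e1 \notin M.
  apply/negP => /D /disjP; apply; exact: (xv_in i1).
split; last by rewrite cardsU1 e1M.
split.
  apply/matchingP => a b; rewrite !in_setU1.
  case/orP=> [/eqP->|aM]; case/orP=> [/eqP->|bM] ne.
  - by rewrite eqxx in ne.
  - exact: D.
  - by rewrite disjoint_sym; apply: D.
  - exact: mM.
by move=> e; rewrite in_setU1 => /orP[/eqP->|]; [|apply: iM].
Qed.


Lemma card_free (T : finType) (P W : {set T}) (M : {set {set T}}) :
  #|P| - (#|P :&: W| + \sum_(e in M) #|P :&: e|) <= #|P :\: (W :|: cov M)|.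
Proof.
rewrite cardsD setIUr; apply: leq_sub2l.
rewrite cardsU; apply: leq_trans (leq_subr _ _) _.
by apply: leq_add => //; apply: card_cov_le.
Qed.

Lemma Inv_cards r t n (H : {set {set vtx t n}}) (W : {set vtx t n}) e : Inv r H W e ->
  [/\ #|PX t n :&: e| <= 1, #|PT t n :&: e| <= 1 & #|PO t n :&: e| <= r].
Proof.
case/Inv_props=> _ _ hx hj [T [hT hr E]].
have TO v : v \in T -> isX v = false /\ inT v = false.
  by move/(subsetP hT); rewrite inE /isO => /andP[/negbTE -> /negbTE ->].
have jX : isX (tv e) = false by case: (tv e) hj.
have xT : inT (xv e) = false by apply: isX_inT.
split.
- rewrite -(cards1 (xv e)); apply: subset_leq_card; apply/subsetP => v.
  rewrite {1}E !inE => /andP[vx]; case/orP=> [//|/orP[/eqP vj|/TO[vx' _]]].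
    by rewrite vj jX in vx.
  by rewrite vx' in vx.
- rewrite -(cards1 (tv e)); apply: subset_leq_card; apply/subsetP => v.
  rewrite {1}E !inE => /andP[vx]; case/orP=> [/eqP vj|/orP[//|/TO[_ vx']]].
    by rewrite vj xT in vx.
  by rewrite vx' in vx.
- rewrite -hr; apply: subset_leq_card; apply/subsetP => v.
  rewrite {1}E !inE /isO => /andP[/andP[vx vt]]; case/orP=> [/eqP vj|/orP[/eqP vj|//]].
    by rewrite vj hx in vx.
  by rewrite vj hj in vt.
Qed.

Lemma free_bounds r t n (H : {set {set vtx t n}}) (W : {set vtx t n}) M :
  t <= n -> GM r H W M ->
  [/\ t.+1 - (#|PX t n :&: W| + #|M|) <= #|PX t n :\: (W :|: cov M)|,
      t - (#|PT t n :&: W| + #|M|) <= #|PT t n :\: (W :|: cov M)| &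
      (n - t) - (#|PO t n :&: W| + #|M| * r) <= #|PO t n :\: (W :|: cov M)|].
Proof.
move=> tn [_ iM].
have s1 (P : {set vtx t n}) c : (forall e, e \in M -> #|P :&: e| <= c) ->
    \sum_(e in M) #|P :&: e| <= #|M| * c.
  by move=> h; rewrite -sum_nat_const; apply: leq_sum => e /h.
split.
- rewrite -{1}(card_PX t n); apply: leq_trans (card_free _ _ _); apply: leq_sub2l; rewrite leq_add2l.
  by rewrite -[X in _ <= X]muln1; apply: s1 => e /iM /Inv_cards[].
- rewrite -{1}(card_PT tn); apply: leq_trans (card_free _ _ _); apply: leq_sub2l; rewrite leq_add2l.
  by rewrite -[X in _ <= X]muln1; apply: s1 => e /iM /Inv_cards[].
- rewrite -{1}(card_PO tn); apply: leq_trans (card_free _ _ _); apply: leq_sub2l; rewrite leq_add2l.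
  by apply: s1 => e /iM /Inv_cards[].
Qed.


Lemma in3 (T : finType) (a b v : T) (S : {set T}) :
  v \in a |: (b |: S) = [|| v == a, v == b | v \in S].
Proof. by rewrite !in_setU1. Qed.

Lemma freeVP (T : finType) (P W : {set T}) (M : {set {set T}}) v :
  v \in P :\: (W :|: cov M) -> [/\ v \in P, v \notin W & forall e, e \in M -> v \notin e].
Proof.
rewrite in_setD in_setU negb_or => /andP[/andP[vW vc] vP]; split => // e eM.
by rewrite (notcov vc eM).
Qed.

Lemma isO_X t n (v : vtx t n) : isO v -> isX v = false /\ inT v = false.
Proof. by rewrite /isO => /andP[/negbTE -> /negbTE ->]. Qed.

Lemma inPO t n (v : vtx t n) : (v \in PO t n) = isO v.
Proof. by rewrite inE. Qed.
Lemma inPT t n (v : vtx t n) : (v \in PT t n) = inT v.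
Proof. by rewrite inE. Qed.
Lemma inPX t n (v : vtx t n) : (v \in PX t n) = isX v.
Proof. by rewrite inE. Qed.

Lemma inT_X t n (v : vtx t n) : inT v -> isX v = false.
Proof. by case: v. Qed.


Lemma augment r t n (H : {set {set vtx t n}}) (W : {set vtx t n}) B f0 M :
  t <= n -> #|PX t n :&: W| <= 1 -> #|PO t n :&: W| <= r.+1 -> #|PT t n :&: W| = 0 ->
  (forall v, #|nbhd r.+1 (Fgraph r.+1 t n) v :\: nbhd r.+1 H v| <= B) ->
  GM r H W M -> #|M| < t ->
  f0 <= (n - t) - (r.+1 + #|M| * r) ->
  B < (t - #|M|) * 'C(f0, r) \/ 2 * B < #|M| * 'C(f0 - r, r) ->
  exists M', GM r H W M' /\ #|M'| = #|M|.+1.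
Proof.
move=> tn hWX hWO hWT hB gM mt hf0 hcase.
set U := W :|: cov M.
set FX := PX t n :\: U; set FT := PT t n :\: U; set FO := PO t n :\: U.
have [bX bT bO] := free_bounds tn gM.
have cFX : t - #|M| <= #|FX|.
  apply: leq_trans bX; lia.
have cFT : t - #|M| <= #|FT| by apply: leq_trans bT; lia.
have cFO : f0 <= #|FO|.
  apply: (leq_trans hf0); apply: leq_trans bO; lia.
have tm0 : 0 < t - #|M| by rewrite subn_gt0.
have [x xFX] : exists x, x \in FX.
  by apply/card_gt0P; apply: leq_trans cFX.
have [xX xW xM] := freeVP xFX; rewrite inPX in xX.
have FOP v (T : {set vtx t n}) : T \in ksub FO r -> v \in T ->
    [/\ isX v = false, inT v = false, v \notin W & forall e, e \in M -> v \notin e].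
  rewrite ksubP => /andP[/subsetP sT _] /sT /freeVP[] /[!inPO] /isO_X[-> ->] *; by split.
have FOsub (T : {set vtx t n}) : T \in ksub FO r -> T \subset PO t n.
  rewrite ksubP => /andP[sT _]; apply: subset_trans sT _; exact: subsetDl.
have FOcard (T : {set vtx t n}) : T \in ksub FO r -> #|T| = r.
  by rewrite ksubP => /andP[_ /eqP].
have inN (v j : vtx t n) (T : {set vtx t n}) G : j \notin T -> T \in ksub FO r ->
    (j |: T \in nbhd r.+1 G v) = (v |: (j |: T) \in G).
  by move=> jT hT; rewrite inE cardsU1 jT (FOcard _ hT) eqxx.
have TnT (j : vtx t n) T : inT j -> T \in ksub FO r -> j \notin T.
  by move=> hj hT; apply/negP => /(FOP _ _ hT)[_ h _ _]; rewrite h in hj.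
have TnX (j : vtx t n) T : isX j -> T \in ksub FO r -> j \notin T.
  by move=> hj hT; apply/negP => /(FOP _ _ hT)[h _ _ _]; rewrite h in hj.
case: (boolP [exists j in FT, exists T in ksub FO r, x |: (j |: T) \in H]).
  case/exists_inP => j jFT /exists_inP[T TK xH].
  have [jT jW jM] := freeVP jFT; rewrite inPT in jT.
  exists (x |: (j |: T) |: M).
  apply: GM_add => //.
  - split => //; last by exists x, j, T; split => //; [exact: FOsub | exact: FOcard].
    apply/disjP => v; rewrite in3 => /or3P[/eqP->|/eqP->|/(FOP _ _ TK)[_ _ vW _]];
      by apply/negP.
  - move=> e eM; apply/disjP => v.
    rewrite in3 => /or3P[/eqP->|/eqP->|/(FOP _ _ TK)[_ _ _ /(_ e eM) ve]]; apply/negP;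
      [exact: xM | exact: jM | exact: ve].
move=> /exists_inPn noA.
have noA' j T : j \in FT -> T \in ksub FO r -> x |: (j |: T) \notin H.
  by move=> jF TK; have /exists_inPn := noA j jF; apply.
have boundA : #|FT| * 'C(#|FO|, r) <= B.
  apply: leq_trans (hB x).
  rewrite -card_ksub -sum_nat_const.
  apply: (@sum_le_inj _ _ FT (fun _ => ksub FO r) id).
  - by move=> ? ? _ _.
  - move=> i i' X iF _ XK; have [iT _ _] := freeVP iF; rewrite inPT in iT.
    exact: TnT.
  - move=> i X iF XK; have [iT _ _] := freeVP iF; rewrite inPT in iT.
    rewrite in_setD !inN ?(TnT _ _ iT XK) //; apply/andP; split; first exact: noA'.
    by apply: InF => //; [exact: FOsub | exact: FOcard].
have hB2 : 2 * B < #|M| * 'C(f0 - r, r).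
  case: hcase => // h; exfalso; move: h; apply/negP; rewrite -leqNgt.
  apply: leq_trans boundA; apply: leq_mul => //; exact: leq_bin2l.
have [j jFT] : exists j, j \in FT.
  by apply/card_gt0P; apply: leq_trans cFT.
have [jT jW jM] := freeVP jFT; rewrite inPT in jT.
case: (gM) => /matchingP mM ie.
have tinj : {in M &, injective (@tv t n)}.
  move=> e1 e2 e1M e2M E; case: (eqVneq e1 e2) => // ne; exfalso.
  have /disjP := mM e1 e2 e1M e2M ne; move/(_ (tv e1)); apply.
    exact: tv_in (ie _ e1M).
  by rewrite E; exact: tv_in (ie _ e2M).
have xinj : {in M &, injective (@xv t n)}.
  move=> e1 e2 e1M e2M E; case: (eqVneq e1 e2) => // ne; exfalso.
  have /disjP := mM e1 e2 e1M e2M ne; move/(_ (xv e1)); apply.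
    exact: xv_in (ie _ e1M).
  by rewrite E; exact: xv_in (ie _ e2M).
set c := 'C(f0 - r, r).
set A := fun e => [set T | (T \in ksub FO r) && (x |: (tv e |: T) \notin H)].
set Bs := fun e => [set T | (T \in ksub FO r) && (j |: (xv e |: T) \notin H)].
have sumA : \sum_(e in M) #|A e| <= B.
  apply: leq_trans (hB x); apply: sum_le_inj tinj _ _.
  - move=> i i' X iM _; rewrite inE => /andP[XK _].
    have [_ _ _ it _] := Inv_props (ie _ iM); exact: TnT.
  - move=> i X iM; rewrite inE => /andP[XK XH].
    have [_ _ _ it _] := Inv_props (ie _ iM).
    rewrite in_setD !inN ?(TnT _ _ it XK) // XH /=.
    by apply: InF => //; [exact: FOsub | exact: FOcard].
have sumB : \sum_(e in M) #|Bs e| <= B.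
  apply: leq_trans (hB j); apply: sum_le_inj xinj _ _.
  - move=> i i' X iM _; rewrite inE => /andP[XK _].
    have [_ _ ix _ _] := Inv_props (ie _ iM); exact: TnX.
  - move=> i X iM; rewrite inE => /andP[XK XH].
    have [_ _ ix _ _] := Inv_props (ie _ iM).
    rewrite in_setD !inN ?(TnX _ _ ix XK) // XH /= setUCA.
    by apply: InF => //; [exact: FOsub | exact: FOcard].
have [e eM he] : exists2 e, e \in M & #|A e| + #|Bs e| < c.
  case: (boolP [exists e in M, #|A e| + #|Bs e| < c]) => [/exists_inP[e ? ?]|/exists_inPn hall].
    by exists e.
  exfalso; have : #|M| * c <= 2 * B.
    rewrite -sum_nat_const mul2n -addnn.
    apply: (@leq_trans (\sum_(e in M) (#|A e| + #|Bs e|))).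
      by apply: leq_sum => e eM; rewrite leqNgt hall.
    by rewrite big_split /= leq_add.
  by rewrite leqNgt hB2.
have cFO' : c <= 'C(#|FO|, r).
  exact: leq_trans (@leq_bin2l _ _ r (leq_subr r f0)) (@leq_bin2l _ _ r cFO).
have [T1 T1K T1H] : exists2 T1, T1 \in ksub FO r & x |: (tv e |: T1) \in H.
  case: (boolP [exists T1 in ksub FO r, x |: (tv e |: T1) \in H]) => [/exists_inP[T1 ? ?]|/exists_inPn hall].
    by exists T1.
  exfalso; have : 'C(#|FO|, r) <= #|A e|.
    rewrite -card_ksub; apply: subset_leq_card; apply/subsetP => T TK.
    by rewrite inE TK; apply: hall.
  move=> h; have := leq_trans cFO' h; rewrite leqNgt => /negP; apply.
  exact: leq_ltn_trans (leq_addr _ _) he.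
have T1sub : T1 \subset FO by move: T1K; rewrite ksubP => /andP[].
have T1r : #|T1| = r by apply: FOcard.
have [T2 T2K T2H] : exists2 T2, T2 \in ksub (FO :\: T1) r & j |: (xv e |: T2) \in H.
  case: (boolP [exists T2 in ksub (FO :\: T1) r, j |: (xv e |: T2) \in H]) => [/exists_inP[T2 ? ?]|/exists_inPn hall].
    by exists T2.
  exfalso; have : 'C(#|FO :\: T1|, r) <= #|Bs e|.
    rewrite -card_ksub; apply: subset_leq_card; apply/subsetP => T TK.
    rewrite inE hall // andbT; move: TK; rewrite !ksubP => /andP[sT ->]; rewrite andbT.
    by apply: subset_trans sT _; apply: subsetDl.
  rewrite cardsD (setIidPr T1sub) T1r => h.
  have := leq_trans (@leq_bin2l _ _ r (leq_sub2r r cFO)) h; rewrite leqNgt => /negP; apply.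
  exact: leq_ltn_trans (leq_addl _ _) he.
have T2K' : T2 \in ksub FO r.
  move: T2K; rewrite !ksubP => /andP[sT ->]; rewrite andbT.
  by apply: subset_trans sT _; apply: subsetDl.
have T2T1 v : v \in T2 -> v \in T1 = false.
  move: T2K; rewrite ksubP => /andP[/subsetP sT _] /sT.
  by rewrite in_setD => /andP[/negbTE].
have eI := ie e eM.
have [eH eW xe te _] := Inv_props eI.
have xve := xv_in eI; have tve := tv_in eI.
have dis e' : e' \in M :\ e -> [disjoint e & e'].
  rewrite in_setD1 => /andP[ne e'M]; apply: mM => //; by rewrite eq_sym.
have gMe : GM r H W (M :\ e) by apply: GM_sub (subsetDl M [set e]) _.
set e2 := xv e |: (j |: T2).
have i2 : Inv r H W e2.
  split; first by rewrite /e2 setUCA.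
    apply/disjP => v; rewrite in3 => /or3P[/eqP->|/eqP->|/(FOP _ _ T2K')[_ _ vW _]].
    - by move=> h; apply: (disjP _ _ eW) xve h.
    - by apply/negP.
    - by apply/negP.
  exists (xv e), j, T2; split => //; [exact: FOsub| exact: FOcard].
have D2 e' : e' \in M :\ e -> [disjoint e2 & e'].
  move=> e'Me; have := e'Me; rewrite in_setD1 => /andP[_ e'M].
  apply/disjP => v; rewrite in3 => /or3P[/eqP->|/eqP->|/(FOP _ _ T2K')[_ _ _ /(_ e' e'M) ve]].
  - exact: (disjP _ _ (dis _ e'Me)).
  - by apply/negP; apply: jM.
  - by apply/negP.
have [g2 c2] := GM_add gMe i2 D2.
set e1 := x |: (tv e |: T1).
have i1 : Inv r H W e1.
  split => //.
    apply/disjP => v; rewrite in3 => /or3P[/eqP->|/eqP->|/(FOP _ _ T1K)[_ _ vW _]].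
    - by apply/negP.
    - by move=> h; apply: (disjP _ _ eW) tve h.
    - by apply/negP.
  exists x, (tv e), T1; split => //; exact: FOsub.
have D1 e' : e' \in e2 |: (M :\ e) -> [disjoint e1 & e'].
  rewrite in_setU1 => /orP[/eqP-> | e'Me].
    apply/disjP => v; rewrite in3 => /or3P[/eqP->|/eqP->|vT1]; rewrite in3 => /or3P[/eqP E|/eqP E|vT2].
    - by have := xM e eM; rewrite E xve.
    - by move: xX; rewrite E (inT_X jT).
    - by have [h _ _ _] := FOP _ _ T2K' vT2; rewrite h in xX.
    - by move: te; rewrite E isX_inT.
    - by have := jM e eM; rewrite -E tve.
    - by have [_ h _ _] := FOP _ _ T2K' vT2; rewrite h in te.
    - by have [h _ _ _] := FOP _ _ T1K vT1; rewrite -E h in xe.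
    - by have [_ h _ _] := FOP _ _ T1K vT1; rewrite -E h in jT.
    - by rewrite T2T1 in vT1.
  have := e'Me; rewrite in_setD1 => /andP[_ e'M].
  apply/disjP => v; rewrite in3 => /or3P[/eqP->|/eqP->|/(FOP _ _ T1K)[_ _ _ /(_ e' e'M) ve]].
  - by apply/negP; apply: xM.
  - exact: (disjP _ _ (dis _ e'Me)).
  - by apply/negP.
have [g1 c1] := GM_add g2 i1 D1.
exists (e1 |: (e2 |: (M :\ e))); split => //.
by rewrite c1 c2 (cardsD1 e M) eM add1n.
Qed.


Lemma big_matching r t n (H : {set {set vtx t n}}) (W : {set vtx t n}) B f0 :
  t <= n -> #|PX t n :&: W| <= 1 -> #|PO t n :&: W| <= r.+1 -> #|PT t n :&: W| = 0 ->
  (forall v, #|nbhd r.+1 (Fgraph r.+1 t n) v :\: nbhd r.+1 H v| <= B) ->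
  f0 <= (n - t) - (r.+1 + t.-1 * r) ->
  (forall m, m < t -> B < (t - m) * 'C(f0, r) \/ 2 * B < m * 'C(f0 - r, r)) ->
  exists M, GM r H W M /\ #|M| = t.
Proof.
move=> tn hWX hWO hWT hB hf0 hc.
suff : forall m, m <= t -> exists M, GM r H W M /\ #|M| = m by apply.
elim => [|m IH] hm.
  exists set0; split; last by rewrite cards0.
  split; last by move=> e; rewrite inE.
  by apply/matchingP => e1 e2; rewrite inE.
have [M [gM cM]] := IH (ltnW hm).
have h1 : #|M| < t by rewrite cM.
have h2 : f0 <= (n - t) - (r.+1 + #|M| * r).
  apply: (leq_trans hf0); apply: leq_sub2l; rewrite leq_add2l cM leq_mul2r.
  by apply/orP; right; rewrite -ltnS prednK //; apply: leq_ltn_trans hm.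
have h3 := hc _ h1.
have [M' [gM' cM']] := augment tn hWX hWO hWT hB gM h1 h2 h3.
by exists M'; rewrite cM' cM.
Qed.

Lemma leq_expr m n e : m <= n -> m ^ e <= n ^ e.
Proof. by move=> h; elim: e => // e IH; rewrite !expnS leq_mul. Qed.

Lemma bin_lower g r : r <= g -> g ^ r <= r ^ r * 'C(g, r).
Proof.
elim: r g => [|r IH] g hg; first by rewrite !expn0 bin0.
case: g hg => [//|g] hg.
have IHg := IH g hg.
have key : (g.+1 * r) ^ r <= r ^ r * (r.+1 ^ r * 'C(g, r)).
  apply: (@leq_trans ((r.+1 * g) ^ r)).
    by apply: leq_expr; nia.
  by rewrite expnMn mulnCA leq_mul2l IHg orbT.
have key2 : g.+1 ^ r <= r.+1 ^ r * 'C(g, r).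
  case: r {IH IHg hg} key => [|r] key; first by rewrite !expn0 bin0.
  by rewrite expnMn mulnC leq_pmul2l ?expn_gt0 // in key.
rewrite [r.+1 ^ r.+1]expnS mulnAC -mul_bin_diag /= [g.+1 ^ r.+1]expnS.
by rewrite -mulnA leq_mul2l (mulnC 'C(g, r)) key2 orbT.
Qed.


Lemma inF_partite r t n (e0 : {set vtx t n}) v :
  #|[set v in e0 | isX v]| = 1 -> #|[set v in e0 | ~~ isX v]| = r.+1 ->
  v \in e0 -> inT v -> e0 \in Fgraph r.+1 t n.
Proof.
move=> /eqP/cards1P[x Ex] hY ve vT.
have [xe xX] : x \in e0 /\ isX x.
  have : x \in [set v in e0 | isX v] by rewrite Ex set11.
  by rewrite inE => /andP.
case: x Ex xe xX => [i|b] Ex xe xX //.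
set S0 := [set y : 'I_n | inr y \in e0].
have E0 : e0 = inl i |: inr @: S0.
  apply/setP; case => [a|b]; rewrite in_setU1.
  - move/setP/(_ (inl a)): Ex; rewrite !inE /= andbT => ->.
    rewrite (_ : inl a \in inr @: S0 = false) ?orbF //.
    by apply/negbTE/negP => /imsetP[].
  - by rewrite mem_imset ?inE //; move=> ? ? [].
have cS : #|S0| = r.+1.
  rewrite -hY; have -> : [set v in e0 | ~~ isX v] = inr @: S0.
    apply/setP; case => [a|b]; rewrite !inE /=.
      by rewrite andbF; apply/esym/negbTE/negP => /imsetP[].
    by rewrite andbT mem_imset ?inE //; move=> ? ? [].
  by rewrite card_imset //; move=> ? ? [].
case: v ve vT => // j ve jT.
rewrite E0; apply: imset2_f => //; rewrite inE cS eqxx /=.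
by apply/existsP; exists j; rewrite inE ve; exact: jT.
Qed.

Lemma nu_ge (T : finType) (H M : {set {set T}}) : M \subset H -> is_matching M -> #|M| <= nu H.
Proof. by move=> sM mM; rewrite /nu; apply: leq_bigmax_cond; rewrite powersetE sM. Qed.

Lemma comb_final r t n (H : {set {set vtx t n}}) B f0 :
  t <= n -> partite1k r.+1 H ->
  (forall v, #|nbhd r.+1 (Fgraph r.+1 t n) v :\: nbhd r.+1 H v| <= B) ->
  f0 <= (n - t) - (r.+1 + t.-1 * r) ->
  (forall m, m < t -> B < (t - m) * 'C(f0, r) \/ 2 * B < m * 'C(f0 - r, r)) ->
  (t <= nu H) /\ (nu H = t -> H \subset Fgraph r.+1 t n).
Proof.
move=> tn hP hB hf0 hc.
have sub W M : GM r H W M -> M \subset H.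
  by case=> _ iM; apply/subsetP => e /iM[].
split.
  have [||| M [gM cM]] := @big_matching r t n H set0 B f0 tn _ _ _ hB hf0 hc;
    rewrite ?setI0 ?cards0 //.
  apply: (@leq_trans #|M|); first by rewrite cM.
  by apply: nu_ge (sub _ _ gM) _; case: gM.
move=> nuE; apply/subsetP => e0 e0H.
case: (boolP (e0 \in Fgraph r.+1 t n)) => // e0F; exfalso.
have [pX pY] := hP e0 e0H.
have noT : #|PT t n :&: e0| = 0.
  apply/eqP; rewrite cards_eq0; apply/eqP/setP => v; rewrite !inE.
  apply/negbTE/negP => /andP[vT ve]; apply: (negP e0F); exact: inF_partite pX pY ve vT.
have eX : PX t n :&: e0 = [set v in e0 | isX v].
  by apply/setP => v; rewrite !inE andbC.
have hWX : #|PX t n :&: e0| <= 1 by rewrite eX pX.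
have hWO : #|PO t n :&: e0| <= r.+1.
  rewrite -pY; apply: subset_leq_card; apply/subsetP => v; rewrite !inE /isO.
  by case/andP=> /andP[-> _] ->.
have [M [[/matchingP mM iM] cM]] := big_matching tn hWX hWO noT hB hf0 hc.
have [x xe] : exists x, x \in e0.
  have /card_gt0P[x] : 0 < #|[set v in e0 | isX v]| by rewrite pX.
  by rewrite inE => /andP[? _]; exists x.
have D e : e \in M -> [disjoint e0 & e].
  by move=> /iM[_ h _]; rewrite disjoint_sym.
have e0M : e0 \notin M.
  by apply/negP => /D /disjP; apply; exact: xe.
have : #|e0 |: M| <= nu H.
  apply: nu_ge.
    by rewrite subUset sub1set e0H (sub _ _ (conj (introT (matchingP _) mM) iM)).
  apply/matchingP => a b; rewrite !in_setU1.
  case/orP=> [/eqP->|aM]; case/orP=> [/eqP->|bM] ne.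
  - by rewrite eqxx in ne.
  - exact: D.
  - by rewrite disjoint_sym; apply: D.
  - exact: mM.
by rewrite cardsU1 e0M cM nuE add1n ltnn.
Qed.

Local Open Scope ring_scope.

Lemma regime2 (R : realType) (r t n g B : nat) (z a a0 : R) :
  0 < z -> 0 < a -> a < a0 -> a0 <= z ^+ r / (6 * (r.+1)%:R ^+ (r + 3)) -> (0 < n)%N ->
  (n%:R / (2 * (r.+1)%:R ^+ 3) : R) <= t%:R -> z * n%:R <= g%:R ->
  B%:R <= a * n%:R ^+ r.+1 -> (r <= g)%N ->
  (3 * B < t * 'C(g, r))%N.
Proof.
set K : R := (r.+1)%:R; set N : R := n%:R.
move=> z0 a0p aa0 ha0 n0 ht hg hB rg.
have K0 : 0 < K by rewrite ltr0n.
have N0 : 0 < N by rewrite ltr0n.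
set C : R := ('C(g, r))%:R.
have C0 : 0 <= C by rewrite ler0n.
have hC : z ^+ r * N ^+ r / K ^+ r <= C.
  rewrite ler_pdivrMr ?exprn_gt0 //.
  have hb : (g%:R : R) ^+ r <= (r%:R) ^+ r * C.
    by rewrite /C -natrX -natrX -natrM ler_nat; apply: bin_lower.
  apply: le_trans (_ : (g%:R : R) ^+ r <= _).
    by rewrite -exprMn; apply: lerXn2r => //; rewrite ?nnegrE ?ler0n ?mulr_ge0 ?ltW.
  apply: le_trans hb _; rewrite mulrC ler_wpM2l //.
  by apply: lerXn2r; rewrite ?nnegrE ?ler0n // ler_nat.
rewrite -(ltr_nat R) !natrM.
apply: (le_lt_trans (_ : _ <= 3%:R * (a * N ^+ r.+1))).
  by rewrite ler_wpM2l.
apply: (lt_le_trans (_ : _ < 3%:R * (a0 * N ^+ r.+1))).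
  by rewrite ltr_pM2l ?ltr0n // ltr_pM2r // exprn_gt0.
apply: (le_trans (_ : _ <= 3%:R * (z ^+ r / (6 * K ^+ (r + 3)) * N ^+ r.+1))).
  by rewrite ler_pM2l ?ltr0n // ler_pM2r // exprn_gt0.
apply: (le_trans (_ : _ <= (N / (2 * K ^+ 3)) * (z ^+ r * N ^+ r / K ^+ r))); last first.
  apply: ler_pM => //; first by rewrite divr_ge0 ?ltW ?mulr_gt0 ?exprn_gt0.
  by rewrite divr_ge0 ?mulr_ge0 ?exprn_ge0 ?ltW.
rewrite le_eqVlt; apply/orP; left; apply/eqP.
have K3 : K ^+ 3 != 0 by rewrite expf_neq0 // gt_eqF.
have Kr : K ^+ r != 0 by rewrite expf_neq0 // gt_eqF.
rewrite exprS exprD.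
field.
by rewrite Kr addrC natr1 gt_eqF.
Qed.

Lemma regime1 (R : realType) (r n g B : nat) (z a a0 : R) :
  0 < z -> 0 < a -> a < a0 -> a0 <= (z / (r.+1)%:R) ^+ r.+1 -> (0 < n)%N ->
  z * n%:R <= g%:R -> (g < r)%N -> B%:R <= a * n%:R ^+ r.+1 -> B = 0%N.
Proof.
set K : R := (r.+1)%:R; set N : R := n%:R.
move=> z0 a0p aa0 ha0 n0 hg gr hB.
have K0 : 0 < K by rewrite ltr0n.
have N0 : 0 < N by rewrite ltr0n.
have : (B%:R : R) < 1.
  apply: le_lt_trans hB _.
  apply: (lt_le_trans (_ : _ < a0 * N ^+ r.+1)).
    by rewrite ltr_pM2r // exprn_gt0.
  apply: (le_trans (_ : _ <= (z / K) ^+ r.+1 * N ^+ r.+1)).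
    by rewrite ler_pM2r // exprn_gt0.
  rewrite -exprMn mulrAC; apply: exprn_ile1; first by rewrite divr_ge0 ?mulr_ge0 ?ltW.
  rewrite ler_pdivrMr // mul1r; apply: le_trans hg _; apply: ltW.
  by rewrite /K ltr_nat; apply: ltn_trans gr _.
by rewrite -[1]/(1%:R) ltr_nat ltnS leqn0 => /eqP.
Qed.

Unset Implicit Arguments.

Theorem lemma4p1 (R : realType) (k : nat) (zeta : R) :
  (1 <= k)%N -> 0 < zeta < 1 ->
  exists alpha0 : R, 0 < alpha0 /\
    forall (alpha : R) (n t : nat),
      0 < alpha < alpha0 ->
      (0 < n)%N -> (0 < t)%N ->
      (8 * k ^ 4 <= n)%N ->
      (n%:R / (2 * k%:R ^+ 3) : R) <= t%:R ->
      (t.+1)%:R < (1 - zeta) * n%:R / k%:R ->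
      forall H : {set {set vtx t n}},
        partite1k k H ->
        (forall v : vtx t n, good k alpha H v) ->
        (t <= nu H)%N /\ (nu H = t -> H \subset Fgraph k t n).
Proof.
move=> hk /andP[z0 z1].
case: k hk => // r _.
set K : R := (r.+1)%:R.
have K0 : 0 < K by rewrite ltr0n.
set a1 := zeta ^+ r / (6 * K ^+ (r + 3)).
set a2 := (zeta / K) ^+ r.+1.
exists (Num.min a1 a2); split.
  rewrite lt_min; apply/andP; split.
    rewrite divr_gt0 // ?exprn_gt0 // mulr_gt0 ?ltr0n // exprn_gt0 //.
  by rewrite exprn_gt0 ?divr_gt0.
move=> alpha n t /andP[ap aa0] n0 t0 _ ht hn H hP hgood.
have ha1 : Num.min a1 a2 <= a1 by rewrite ge_min lexx.
have ha2 : Num.min a1 a2 <= a2 by rewrite ge_min lexx orbT.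
set B := (\max_(v : vtx t n) #|nbhd r.+1 (Fgraph r.+1 t n) v :\: nbhd r.+1 H v|)%N.
have hB v : (#|nbhd r.+1 (Fgraph r.+1 t n) v :\: nbhd r.+1 H v| <= B)%N.
  exact: (leq_bigmax (F := fun v => #|nbhd r.+1 (Fgraph r.+1 t n) v :\: nbhd r.+1 H v|)).
have hBR : (B%:R : R) <= alpha * n%:R ^+ r.+1.
  rewrite /B; elim/big_ind: _ => //.
  - by apply: mulr_ge0; [exact: ltW | apply: exprn_ge0; exact: ler0n].
  - by move=> x y hx hy; rewrite /maxn; case: ifP.
  - by move=> v _; apply: hgood.
set N : R := n%:R.
have N0 : 0 < N by rewrite ltr0n.
rewrite ltr_pdivlMr // in hn.
have key : ((r.+1 * t.+1)%N%:R : R) + zeta * N < N.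
  rewrite natrM -/K mulrC; lra.
have ktn : (r.+1 * t.+1 < n)%N.
  rewrite -(ltr_nat R); apply: le_lt_trans key; rewrite lerDl mulr_ge0 ?ltW //.
have tn : (t <= n)%N.
  apply: leq_trans (ltnW ktn); apply: leq_trans (leqnSn t) _; exact: leq_pmull.
set f0 := (n - t - (r.+1 + t.-1 * r))%N.
have [f0E f0r] : (f0 - r = n - r.+1 * t.+1)%N /\ (r <= f0)%N.
  rewrite /f0; have : t = t.-1.+1 by rewrite prednK.
  move: (t.-1) => t' tE; rewrite tE in ktn *.
  have E : (r.+1 * t'.+2 = t' * r + t' + 2 * r + 2)%N by ring.
  rewrite E in ktn *; move: (t' * r) ktn => X ktn; lia.
set g := (f0 - r)%N.
have hg : zeta * N <= g%:R.
  rewrite /g f0E natrB ?(ltnW ktn) //; lra.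
apply: (comb_final tn hP hB (leqnn _)).
move=> m mt.
case: (ltnP g r) => gr.
  have B0 : B = 0%N.
    apply: (regime1 (a0 := Num.min a1 a2) z0 ap aa0 ha2 n0 hg gr hBR).
  left; rewrite B0 muln_gt0 subn_gt0 mt bin_gt0 f0r //.
case: (ltnP B ((t - m) * 'C(f0, r))) => hA; [by left | right].
have h3 : (3 * B < t * 'C(g, r))%N.
  apply: (regime2 (a0 := Num.min a1 a2) z0 ap aa0 (le_trans ha1 _) n0 ht hg hBR gr).
  by rewrite /a1.
have e1 : ((t - m) * 'C(g, r) <= (t - m) * 'C(f0, r))%N.
  by rewrite leq_mul // leq_bin2l // leq_subr.
have e2 : (m * 'C(g, r) + (t - m) * 'C(g, r) = t * 'C(g, r))%N.
  by rewrite -mulnDl subnKC // ltnW.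
move: hA h3 e1 e2; move: ((t - m) * 'C(f0, r))%N ((t - m) * 'C(g, r))%N (m * 'C(g, r))%N (t * 'C(g, r))%N.
move=> p q s u h1 h2 h3 h4; clear -h1 h2 h3 h4; lia.
Qed.
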